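(* Let $\mathbb{S}\in\mathbb{Z}^{N_X\times N_e}$, let $\mathbb{V}\in\mathbb{R}^{N_e\times N_z}$ be a matrix whose columns form a basis of $\mathrm{Ker}\,\mathbb{S}$, let $\mathcal{X}=\mathbb{R}^{N_X}_{>0}$, and let $\{\Psi^*_x\}_{x\in\mathcal{X}}$ be a family of dissipation functions on $\mathbb{R}^{N_e}$ with conjugates $\Psi_x$. Fix $x\in\mathcal{X}$ and let the cycle spaces be $\mathcal{Z}_x:=\mathbb{R}^{N_z}$ and $\mathfrak{Z}_x:=\mathrm{Im}\,\mathbb{V}^T=\mathbb{R}^{N_z}$, with the standard pairing. For $\zeta\in\mathfrak{Z}_x$ let $f^\lozenge(x,\zeta)$ be the unique minimizer of $\Psi^*_x(f)$ over $\{f\in\mathbb{R}^{N_e}:\mathbb{V}^Tf=\zeta\}$, and define $$\hat{\Psi}_x(z):=\Psi_x(\mathbb{V}z)\ (z\in\mathcal{Z}_x),\qquad \hat{\Psi}^*_x(\zeta):=\Psi^*_x\big(f^\lozenge(x,\zeta)\big)\ (\zeta\in\mathfrak{Z}_x).$$ Then $\hat{\Psi}_x$ and $\hat{\Psi}^*_x$ are Legendre–Fenchel conjugates of each other, $\hat{\Psi}^*_x(\zeta)=\max_{z}[\langle z,\zeta\rangle-\hat{\Psi}_x(z)]$ and $\hat{\Psi}_x(z)=\max_{\zeta}[\langle z,\zeta\rangle-\hat{\Psi}^*_x(\zeta)]$; their gradients $\nabla\hat{\Psi}_x(z)=\mathbb{V}^T\nabla\Psi_x(\mathbb{V}z)$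 and $\nabla\hat{\Psi}^*_x$ are mutually inverse bijections between $\mathcal{Z}_x$ and $\mathfrak{Z}_x$ (with $\mathbb{V}\nabla\hat\Psi^*_x(\zeta)=\nabla\Psi^*_x(f^\lozenge(x,\zeta))$); and both $\hat{\Psi}_x$ and $\hat{\Psi}^*_x$ are dissipation functions (strictly convex, $1$-coercive, symmetric under sign change, vanishing at $0$). That is, the dissipation functions on the edge spaces induce a dually flat structure on the cycle spaces.
   Context: A dissipation function on $\mathbb{R}^{n}$ is a strictly convex, continuously differentiable, $1$-coercive ($\psi(f)/\|f\|\to\infty$ as $\|f\|\to\infty$), even function $\psi$ with $\psi(0)=0$. $\Psi_x(j):=\max_f[\langle j,f\rangle-\Psi^*_x(f)]$ is the Legendre–Fenchel conjugate of $\Psi^*_x$ (also a dissipation function), and $\nabla\Psi_x,\nabla\Psi^*_x$ are mutually inverse bijections of $\mathbb{R}^{N_e}$. Note $\mathrm{Ker}\,\mathbb{V}=\{0\}$, $\mathrm{Im}\,\mathbb{V}=\mathrm{Ker}\,\mathbb{S}$, $\mathrm{Ker}\,\mathbb{V}^T=\mathrm{Im}\,\mathbb{S}^T$. *)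

(* Defs.v *)
From HB Require Import structures.
From mathcomp Require Import all_boot all_order all_algebra.
From mathcomp Require Import all_classical all_reals all_analysis.
Set Implicit Arguments. Unset Strict Implicit. Unset Printing Implicit Defensive.
Import Order.TTheory GRing.Theory Num.Theory.
Import numFieldNormedType.Exports.
Local Open Scope classical_set_scope.
Local Open Scope ring_scope.

Section Defs.
Variable R : realType.

Definition dotv (n : nat) (u v : 'cV[R]_n) : R := (u^T *m v) 0 0.

Definition grad (n : nat) (f : 'cV[R]_n -> R) (x : 'cV[R]_n) : 'cV[R]_n :=
  \col_i ('d f x (delta_mx i 0 : 'cV[R]_n)).

Definition strictly_convex (n : nat) (f : 'cV[R]_n -> R) : Prop :=
  forall (x y : 'cV[R]_n) (t : R), x != y -> 0 < t -> t < 1 ->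
    f (t *: x + (1 - t) *: y) < t * f x + (1 - t) * f y.

Definition C1 (n : nat) (f : 'cV[R]_n -> R) : Prop :=
  (forall x, differentiable f x) /\ continuous (grad f).

Definition coercive1 (n : nat) (f : 'cV[R]_n -> R) : Prop :=
  forall M : R, exists r : R, forall x : 'cV[R]_n,
    r < `|x| -> M < f x / `|x|.

Definition even_fun (n : nat) (f : 'cV[R]_n -> R) : Prop :=
  forall x, f (- x) = f x.

Definition dissipation (n : nat) (f : 'cV[R]_n -> R) : Prop :=
  [/\ strictly_convex f, C1 f, coercive1 f, even_fun f & f 0 = 0].

Definition LF_conj (n : nat) (g h : 'cV[R]_n -> R) : Prop :=
  forall j : 'cV[R]_n,
    (exists f, h j = dotv j f - g f) /\ (forall f, dotv j f - g f <= h j).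

Definition is_constr_min (m n : nat) (g : 'cV[R]_m -> R) (A : 'M[R]_(n, m))
  (b : 'cV[R]_n) (f : 'cV[R]_m) : Prop :=
  A *m f = b /\ forall f', A *m f' = b -> g f <= g f'.

Definition fdiamond (Ne Nz : nat) (PsiSx : 'cV[R]_Ne -> R) (V : 'M[R]_(Ne, Nz))
  (zeta : 'cV[R]_Nz) : 'cV[R]_Ne :=
  xget 0 [set f | is_constr_min PsiSx V^T zeta f].

Definition hatPsi (Ne Nz : nat) (Psix : 'cV[R]_Ne -> R) (V : 'M[R]_(Ne, Nz))
  (z : 'cV[R]_Nz) : R := Psix (V *m z).

Definition hatPsiS (Ne Nz : nat) (PsiSx : 'cV[R]_Ne -> R) (V : 'M[R]_(Ne, Nz))
  (zeta : 'cV[R]_Nz) : R := PsiSx (fdiamond PsiSx V zeta).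

End Defs.

(* Main.v *)
Require Import Defs.
From HB Require Import structures.
From mathcomp Require Import all_boot all_order all_algebra.
From mathcomp Require Import all_classical all_reals all_analysis.
From mathcomp Require Import lra ring.
Import Order.TTheory GRing.Theory Num.Theory.
Import numFieldNormedType.Exports.
Local Open Scope classical_set_scope.
Local Open Scope ring_scope.
Set Implicit Arguments. Unset Strict Implicit. Unset Printing Implicit Defensive.

Section Basic.
Variable R : realType.

Lemma mx_entry_le m n (M : 'M[R]_(m, n)) i j : `|M i j| <= `|M|.
Proof.
rewrite (_ : `|M| = mx_norm M) // mx_normrE; apply/bigmax_geP; right => /=; by exists (i, j).
Qed.

Lemma mx_norm_le m n (M : 'M[R]_(m, n)) c : 0 <= c ->
  (forall i j, `|M i j| <= c) -> `|M| <= c.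
Proof.
move=> c0 H; rewrite (_ : `|M| = mx_norm M) // mx_normrE; apply/bigmax_leP; split => // -[i j] _; exact: H.
Qed.

Lemma mx_norm_att m n (M : 'M[R]_(m, n)) : M != 0 -> exists i j, `|M| = `|M i j|.
Proof.
move=> M0; have : mx_norm M != 0 by rewrite -[mx_norm M]/(`|M|) normr_eq0.
by move=> /mx_norm_neq0 [[i j] h]; exists i, j; exact: h.
Qed.

Lemma dotvE n (u v : 'cV[R]_n) : dotv u v = \sum_i u i 0 * v i 0.
Proof. by rewrite /dotv mxE; apply: eq_bigr => i _; rewrite mxE. Qed.

Lemma dotvC n (u v : 'cV[R]_n) : dotv u v = dotv v u.
Proof. by rewrite !dotvE; apply: eq_bigr => i _; rewrite mulrC. Qed.

Lemma dotv_mulmx m n (A : 'M[R]_(m, n)) u v : dotv (A *m u) v = dotv u (A^T *m v).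
Proof. by rewrite /dotv trmx_mul mulmxA. Qed.

Lemma dotvDr n (u v w : 'cV[R]_n) : dotv u (v + w) = dotv u v + dotv u w.
Proof. by rewrite /dotv mulmxDr mxE. Qed.
Lemma dotvZr n (u v : 'cV[R]_n) a : dotv u (a *: v) = a * dotv u v.
Proof. by rewrite /dotv -scalemxAr mxE. Qed.
Lemma dotvNr n (u v : 'cV[R]_n) : dotv u (- v) = - dotv u v.
Proof. by rewrite /dotv mulmxN mxE. Qed.
Lemma dotvBr n (u v w : 'cV[R]_n) : dotv u (v - w) = dotv u v - dotv u w.
Proof. by rewrite dotvDr dotvNr. Qed.
Lemma dotv0r n (u : 'cV[R]_n) : dotv u 0 = 0.
Proof. by rewrite /dotv mulmx0 mxE. Qed.
Lemma dotvDl n (u v w : 'cV[R]_n) : dotv (v + w) u = dotv v u + dotv w u.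
Proof. by rewrite dotvC dotvDr !(dotvC u). Qed.
Lemma dotvZl n (u v : 'cV[R]_n) a : dotv (a *: v) u = a * dotv v u.
Proof. by rewrite dotvC dotvZr dotvC. Qed.
Lemma dotvNl n (u v : 'cV[R]_n) : dotv (- v) u = - dotv v u.
Proof. by rewrite dotvC dotvNr dotvC. Qed.
Lemma dotvBl n (u v w : 'cV[R]_n) : dotv (v - w) u = dotv v u - dotv w u.
Proof. by rewrite dotvDl dotvNl. Qed.
Lemma dotv0l n (u : 'cV[R]_n) : dotv 0 u = 0.
Proof. by rewrite dotvC dotv0r. Qed.

Lemma dotv_delta n (v : 'cV[R]_n) i : dotv (delta_mx i 0) v = v i 0.
Proof.
rewrite dotvE (bigD1 i) //= big1 ?addr0; first by rewrite mxE !eqxx mul1r.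
by move=> j ji; rewrite mxE (negbTE ji) mul0r.
Qed.

Lemma dotv_bound n (u v : 'cV[R]_n) : `|dotv u v| <= n%:R * (`|u| * `|v|).
Proof.
rewrite dotvE (le_trans (ler_norm_sum _ _ _)) //.
have -> : n%:R * (`|u| * `|v|) = \sum_(i < n) (`|u| * `|v|) by rewrite sumr_const card_ord mulr_natl.
apply: ler_sum => i _.
by rewrite normrM ler_pM ?mx_entry_le.
Qed.

Lemma mulmx_bound m n (A : 'M[R]_(m, n)) : exists2 K, 0 <= K &
  forall x : 'cV[R]_n, `|A *m x| <= K * `|x|.
Proof.
exists (\sum_i \sum_k `|A i k|); first by apply: sumr_ge0 => i _; apply: sumr_ge0.
move=> x; apply: mx_norm_le.
  by apply: mulr_ge0 => //; apply: sumr_ge0 => i _; apply: sumr_ge0.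
move=> i j; rewrite mxE (le_trans (ler_norm_sum _ _ _)) //.
rewrite (bigD1 i) //= mulrDl ler_wpDr //.
  by apply: mulr_ge0 => //; apply: sumr_ge0 => ? _; apply: sumr_ge0.
rewrite mulr_suml; apply: ler_sum => k _.
by rewrite normrM ler_wpM2l ?mx_entry_le.
Qed.

Lemma lin_cont a b c d (f : {linear 'M[R]_(a, b) -> 'M[R]_(c, d)}) K :
  (forall x, `|f x| <= K * `|x|) -> continuous f.
Proof.
move=> fK; apply: bounded_linear_continuous; apply/linear_boundedP.
exists K; split; first exact: num_real.
move=> r /ltW Kr x; apply: (le_trans (fK x)); exact: ler_wpM2r.
Qed.

Lemma mulmx_cont m n (A : 'M[R]_(m, n)) : continuous (fun x : 'cV[R]_n => A *m x).
Proof.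
have [K _ HK] := mulmx_bound A.
exact: (@lin_cont _ _ _ _ (mulmx A) K).
Qed.

Lemma trmx_norm m n (x : 'M[R]_(m, n)) : `|x^T| <= `|x|.
Proof. by apply: mx_norm_le => // i j; rewrite mxE mx_entry_le. Qed.

Lemma trmx_cont m n : continuous (fun x : 'M[R]_(m, n) => x^T).
Proof.
apply: (@lin_cont _ _ _ _ (@trmx R m n) 1) => x; rewrite mul1r; exact: trmx_norm.
Qed.

Lemma gradE n (f : 'cV[R]_n -> R) x v : differentiable f x ->
  'd f x v = dotv (grad f x) v.
Proof.
move=> _; rewrite dotvE {1}(matrix_sum_delta v) linear_sum /=.
apply: eq_bigr => i _; rewrite big_ord1 linearZ /= /grad mxE mulrC.
by congr (_ * _); congr ('d f x _); apply/matrixP => p q; rewrite !mxE; case: q => -[].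
Qed.

Lemma fermat n (F : 'cV[R]_n -> R) z v a :
  (forall y, differentiable F y) ->
  (forall t : R, F z <= F (z + t *: v) - t * a) -> 'd F z v = a.
Proof.
move=> dF Hmin.
pose g (t : R) := t *: v + z.
have dg t : differentiable g t.
  apply: differentiableD; last exact: differentiable_cst.
  exact: (@differentiableZl _ _ _ id v t).
pose phi (t : R) := F (g t) - t * a.
have dphi t : derivable phi t 1.
  apply/derivable1_diffP; apply: differentiableB.
    exact: (differentiable_comp (dg t) (dF _)).
  exact: differentiableM.
have := @derive1_at_min R phi (-1) 1 0.
have m11 : -1 <= (1:R) by rewrite (le_trans (lerN10 _)).
rewrite in_itv /= ltrN10 ltr01 => /(_ m11 (fun t _ => dphi t) isT).
have hmin : forall t : R, t \in `]-1, 1[ -> phi 0 <= phi t.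
  move=> t _; rewrite /phi /g scale0r add0r mul0r subr0 (addrC (t *: v)); exact: Hmin.
move=> /(_ hmin) => H.
have := @derive_val _ _ _ _ _ _ _ H.
have dg0 : derivable (F \o g) 0 1.
  apply/derivable1_diffP; exact: (differentiable_comp (dg 0) (dF _)).
have dl : derivable (a \o* id) (0:R) 1 by [].
rewrite (_ : phi = (F \o g) - (a \o* id)) // deriveB // deriveMr // derive_id.
have -> : 'D_1 (F \o g) 0 = 'D_v F z.
  rewrite /derive; do 2 f_equal; apply/funext => h /=.
  by rewrite /g /= scale0r add0r addr0 [h%:A]mulr1.
by rewrite deriveE // mulr1 => /eqP; rewrite subr_eq0 => /eqP.
Qed.

Lemma cV_min n (A : set 'cV[R]_n) (g : 'cV[R]_n -> R) r :
  A !=set0 -> closed A -> (forall y, A y -> `|y| <= r) -> continuous g ->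
  exists2 y0, A y0 & forall y, A y -> g y0 <= g y.
Proof.
move=> [a Aa] cA bA cg.
pose B := [set u : 'rV[R]_n | A u^T].
have cB : closed B.
  have -> : B = (fun u : 'rV[R]_n => u^T) @^-1` A by [].
  apply: preimage_closed => //= u _; exact: trmx_cont.
have bB : bounded_set B.
  exists r; split; first exact: num_real.
  move=> M rM u Bu /=; rewrite -[u]trmxK.
  by rewrite (le_trans (trmx_norm _)) // (le_trans (bA _ Bu)) // ltW.
have B0 : B !=set0 by exists a^T; rewrite /B /= trmxK.
have cgB : {within B, continuous (fun u : 'rV[R]_n => g u^T)}.
  apply: continuous_subspaceT => u.
  exact: (continuous_comp (@trmx_cont 1 n u) (cg _)).
have [c /set_mem Bc Hc] := compact_EVT_min B0 (bounded_closed_compact bB cB) cgB.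
exists c^T => // y Ay; have := Hc y^T; rewrite trmxK; apply.
by apply/mem_set; rewrite /B /= trmxK.
Qed.

Lemma convex_of_strict n (F : 'cV[R]_n -> R) : strictly_convex F ->
  forall x y t, 0 <= t -> t <= 1 ->
  F (t *: x + (1 - t) *: y) <= t * F x + (1 - t) * F y.
Proof.
move=> sF x y t t0 t1.
have [->|xy] := eqVneq x y.
  by rewrite -scalerDl -mulrDl addrC subrK scale1r mul1r.
move: t0; rewrite le_eqVlt => /orP [/eqP <-|t0].
  by rewrite scale0r mul0r !add0r subr0 scale1r mul1r.
move: t1; rewrite le_eqVlt => /orP [/eqP ->|t1].
  by rewrite subrr scale0r mul0r !addr0 scale1r mul1r.
exact/ltW/sF.
Qed.

Lemma diss_ge0 n (F : 'cV[R]_n -> R) : dissipation F -> forall y, 0 <= F y.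
Proof.
move=> [sF _ _ eF F0] y.
have [->|y0] := eqVneq y 0; first by rewrite F0.
have yNy : y != - y.
  apply: contra y0 => /eqP h; apply/eqP.
  have : y + y = 0 by rewrite {1}h addNr.
  by rewrite -mulr2n -scaler_nat => /eqP; rewrite scaler_eq0 pnatr_eq0 /= => /eqP.
have := sF y (- y) (2^-1) yNy; rewrite invr_gt0 ltr0n invf_lt1 ?ltr0n // ltr1n.
have -> : 1 - (2:R)^-1 = 2^-1 by rewrite {1}(splitr 1) mul1r addrK.
rewrite scalerN subrr F0 eF -mulrDl.
have -> : (2:R)^-1 + 2^-1 = 1 by rewrite [RHS](splitr 1) mul1r.
by rewrite mul1r => /(_ isT isT) /ltW.
Qed.

Lemma max_grad n (F : 'cV[R]_n -> R) z zeta :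
  (forall y, differentiable F y) ->
  (forall y, dotv y zeta - F y <= dotv z zeta - F z) -> grad F z = zeta.
Proof.
move=> dF H; apply/matrixP => i j; rewrite (ord1 j) /grad mxE.
apply: fermat => // t; have := H (z + t *: delta_mx i 0).
rewrite dotvDl dotvZl dotv_delta.
move=> h; lra.
Qed.

Lemma lower_M n (F : 'cV[R]_n -> R) :
  (forall xi, exists B, forall y, dotv y xi - B <= F y) ->
  forall M, 0 <= M -> exists C, forall y, M * `|y| - C <= F y.
Proof.
move=> H M M0; have [Bf HB] := choice H.
pose e (i : 'I_n) : 'cV[R]_n := M *: delta_mx i 0.
exists (`|Bf 0| + \sum_i (`|Bf (e i)| + `|Bf (- e i)|)) => y.
have Sge0 : 0 <= \sum_i (`|Bf (e i)| + `|Bf (- e i)|) by apply: sumr_ge0 => i _.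
have [->|y0] := eqVneq y 0.
  rewrite normr0 mulr0 sub0r; apply: le_trans (HB 0 0).
  rewrite dotv0l sub0r lerN2 (le_trans (ler_norm _)) // lerDl //.
have [i [j]] := mx_norm_att y0; rewrite (ord1 j) => ny.
have Hle : forall xi, dotv y xi = M * `|y| -> `|Bf xi| <= `|Bf 0| + \sum_i (`|Bf (e i)| + `|Bf (- e i)|) ->
    M * `|y| - (`|Bf 0| + \sum_i (`|Bf (e i)| + `|Bf (- e i)|)) <= F y.
  move=> xi dxi hB; apply: le_trans (HB xi y); rewrite dxi lerD2l lerN2.
  exact: le_trans (ler_norm _) hB.
have bigle : forall k, `|Bf (e k)| + `|Bf (- e k)| <= `|Bf 0| + \sum_i (`|Bf (e i)| + `|Bf (- e i)|).
  move=> k; rewrite (bigD1 k) //=.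
  have : 0 <= \sum_(i0 < n | i0 != k) (`|Bf (e i0)| + `|Bf (- e i0)|) by apply: sumr_ge0.
  have := normr_ge0 (Bf 0); lra.
have [yp|yn] := leP 0 (y i 0).
  apply: (Hle (e i)); last by apply: le_trans (bigle i); rewrite lerDl.
  by rewrite /e dotvZr dotvC dotv_delta ny ger0_norm.
apply: (Hle (- e i)); last by apply: le_trans (bigle i); rewrite lerDr.
by rewrite /e dotvNr dotvZr dotvC dotv_delta ny ltr0_norm // mulrN.
Qed.

Lemma coercive_of_lower n (F : 'cV[R]_n -> R) :
  (forall M, 0 <= M -> exists C, forall y, M * `|y| - C <= F y) -> coercive1 F.
Proof.
move=> H M; have [C HC] := H (`|M| + 1) (addr_ge0 (normr_ge0 _) ler01).
exists `|C| => x Cx.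
have x0 : 0 < `|x| by apply: le_lt_trans Cx.
rewrite ltr_pdivlMr //; apply: lt_le_trans (HC x).
have h1 : M * `|x| <= `|M| * `|x| by rewrite ler_wpM2r // ler_norm.
have h2 : C <= `|C| := ler_norm C.
rewrite mulrDl mul1r; lra.
Qed.
End Basic.

Section Main.
Variable R : realType.
Variables (Ne Nz : nat) (V : 'M[R]_(Ne, Nz)) (P Q : 'cV[R]_Ne -> R).
Hypothesis Vinj : forall z : 'cV[R]_Nz, V *m z = 0 -> z = 0.
Hypothesis dP : dissipation P.
Hypothesis LF : LF_conj P Q.
Hypothesis dQ : dissipation Q.
Hypothesis gQP : forall f, grad Q (grad P f) = f.
Hypothesis gPQ : forall j, grad P (grad Q j) = j.

Lemma diffP' f : differentiable P f. Proof. by case: dP => _ [] . Qed.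
Lemma diffQ' j : differentiable Q j. Proof. by case: dQ => _ [] . Qed.

Lemma FY j f : dotv j f - P f <= Q j.
Proof. exact: (LF j).2. Qed.

Lemma EqPQ f : Q (grad P f) = dotv (grad P f) f - P f.
Proof.
set j := grad P f; have [[f0 H0] Hle] := LF j.
have g0 : grad P f0 = j.
  apply: max_grad; first exact: diffP'.
  by move=> y; rewrite dotvC (dotvC f0) -H0; exact: Hle.
have ef : f0 = f by rewrite -(gQP f0) g0 /j gQP.
by rewrite H0 ef.
Qed.

Lemma convP f f' : P f + dotv (grad P f) (f' - f) <= P f'.
Proof.
have := FY (grad P f) f'; rewrite EqPQ dotvBr; lra.
Qed.

Lemma WR : exists W : 'M[R]_(Ne, Nz), V^T *m W = 1%:M.
Proof.
have rf : row_free V^T.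
  rewrite -kermx_eq0; apply/eqP/row_matrixP => i; rewrite row0.
  have K0 : kermx V^T *m V^T = 0 by apply/sub_kermxP.
  have : row i (kermx V^T) *m V^T = 0 by rewrite -row_mul K0 row0.
  move=> /(congr1 trmx); rewrite trmx_mul trmxK trmx0 => /Vinj.
  by move=> /(congr1 trmx); rewrite trmxK trmx0.
by exists (pinvmx V^T); exact: mulmxVp.
Qed.

Local Notation hP := (hatPsi Q V).

Lemma dmulV z : differentiable (fun z : 'cV[R]_Nz => V *m z) z.
Proof.
have -> : (fun z : 'cV[R]_Nz => V *m z) = mulmx V by [].
apply: linear_differentiable; exact: mulmx_cont.
Qed.

Lemma dhP z : differentiable hP z.
Proof.
rewrite /hatPsi; apply: (differentiable_comp (dmulV z)); exact: diffQ'.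
Qed.

Lemma grad_hP z : grad hP z = V^T *m grad Q (V *m z).
Proof.
apply/matrixP => i j; rewrite (ord1 j).
rewrite -[RHS]dotv_delta -dotv_mulmx dotvC -gradE; last exact: diffQ'.
rewrite /grad mxE.
have -> : hP = Q \o (mulmx V) by [].
rewrite diff_comp //; last exact: diffQ'.
rewrite /= diff_lin; last exact: mulmx_cont.
  reflexivity. exact: dmulV.
Qed.

Lemma cont_grad_hP : continuous (grad hP).
Proof.
have -> : grad hP = (fun z => V^T *m grad Q (V *m z)).
  by apply/funext => z; exact: grad_hP.
move=> z; apply: continuous_comp; last exact: mulmx_cont.
apply: continuous_comp; first exact: mulmx_cont.
by case: dQ => _ [_ H] _ _ _; exact: H.
Qed.

Lemma hP_lower xi : exists B, forall y, dotv y xi - B <= hP y.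
Proof.
have [W HW] := WR; exists (P (W *m xi)) => y.
have -> : dotv y xi = dotv (V *m y) (W *m xi) by rewrite dotv_mulmx mulmxA HW mul1mx.
exact: FY.
Qed.

Lemma hP0 : hP 0 = 0.
Proof. by rewrite /hatPsi mulmx0; case: dQ. Qed.

Lemma dotv_cont n (zeta : 'cV[R]_n) : continuous (fun y : 'cV[R]_n => dotv y zeta).
Proof.
have -> : (fun y : 'cV[R]_n => dotv y zeta) = (fun M : 'M[R]_1 => M 0 0) \o mulmx zeta^T.
  by apply/funext => y /=; rewrite dotvC.
move=> y; apply: continuous_comp; first exact: mulmx_cont.
exact: coord_continuous.
Qed.

Lemma exists_grad zeta : exists z, grad hP z = zeta.
Proof.
have [C HC] := lower_M hP_lower (addr_ge0 (mulr_ge0 (ler0n _ Nz) (normr_ge0 zeta)) ler01).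
pose g y := hP y - dotv y zeta.
have gb y : `|y| - C <= g y.
  have := HC y; have := ler_norm (dotv y zeta); have := dotv_bound y zeta.
  rewrite /g mulrDl mul1r mulrA mulrAC.
  move: (dotv y zeta) (hP y) (Nz%:R * `|zeta| * `|y|) => a b c; lra.
pose A := [set y : 'cV[R]_Nz | `|y| <= `|C|].
have cA : closed A.
  have -> : A = (fun y : 'cV[R]_Nz => `|y|) @^-1` [set x | x <= `|C|] by [].
  apply: preimage_closed; last exact: closed_le.
  move=> y _; exact: norm_continuous.
have cg : continuous g.
  move=> y; apply: continuousB; last exact: dotv_cont.
  exact/differentiable_continuous/dhP.
have A0 : A !=set0 by exists 0; rewrite /A /= normr0.
have [y0 Ay0 Hy0] := @cV_min _ _ A g `|C| A0 cA (fun _ h => h) cg.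
have gmin y : g y0 <= g y.
  have [Ay|nAy] := pselect (A y); first exact: Hy0.
  apply: (le_trans (Hy0 0 _)); first by rewrite /A /= normr0.
  have : `|C| < `|y| by rewrite ltNge; apply/negP => h; exact: nAy.
  have := gb y; have := ler_norm C; rewrite /g dotv0l hP0; lra.
exists y0; apply: max_grad; first exact: dhP.
by move=> y; have := gmin y; rewrite /g; lra.
Qed.


Lemma min_of_grad z : is_constr_min P V^T (grad hP z) (grad Q (V *m z)).
Proof.
split; first by rewrite grad_hP.
move=> f' Hf'; have := convP (grad Q (V *m z)) f'.
rewrite gPQ dotv_mulmx mulmxBr Hf' grad_hP subrr dotv0r addr0; exact.
Qed.

Lemma constr_min_uniq zeta f1 f2 :
  is_constr_min P V^T zeta f1 -> is_constr_min P V^T zeta f2 -> f1 = f2.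
Proof.
move=> [h1 m1] [h2 m2]; apply/eqP; apply/negPn/negP => f12.
have [sP _ _ _ _] := dP.
pose t : R := 2^-1.
have t0 : 0 < t by rewrite invr_gt0 ltr0n.
have t1 : t < 1 by rewrite invf_lt1 ?ltr0n // ltr1n.
clearbody t.
have := sP f1 f2 t f12 t0 t1.
have hm : V^T *m (t *: f1 + (1 - t) *: f2) = zeta.
  by rewrite mulmxDr -!scalemxAr h1 h2 -scalerDl addrC subrK scale1r.
have e12 : P f1 = P f2 by apply/eqP; rewrite eq_le m1 // m2.
have e1 : t + (1 - t) = 1 by rewrite addrCA subrr addr0.
rewrite -e12 -(mulrDl t (1 - t) (P f1)) e1 mul1r => h. have := lt_le_trans h (m1 _ hm).
by rewrite ltxx.
Qed.

Lemma grad_hP_inj z1 z2 : grad hP z1 = grad hP z2 -> z1 = z2.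
Proof.
move=> e.
have m2 : is_constr_min P V^T (grad hP z1) (grad Q (V *m z2)).
  by rewrite e; exact: min_of_grad.
have h := constr_min_uniq (min_of_grad z1) m2.
have e2 : V *m z1 = V *m z2 := etrans (esym (gPQ _)) (etrans (congr1 (grad P) h) (gPQ _)).
by apply/eqP; rewrite -subr_eq0; apply/eqP/Vinj; rewrite mulmxBr e2 subrr.
Qed.

Definition zz (zeta : 'cV[R]_Nz) := xget 0 [set z | grad hP z = zeta].

Lemma zzP zeta : grad hP (zz zeta) = zeta.
Proof. exact: (xgetPex 0 (exists_grad zeta)). Qed.

Lemma zz_grad z : zz (grad hP z) = z.
Proof. by apply: grad_hP_inj; rewrite zzP. Qed.

Lemma fd_eq zeta : fdiamond P V zeta = grad Q (V *m zz zeta).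
Proof.
rewrite /fdiamond; apply: xget_unique; first by rewrite /= -{1}(zzP zeta); exact: min_of_grad.
move=> f hf; apply: (constr_min_uniq hf); rewrite -{1}(zzP zeta); exact: min_of_grad.
Qed.

Local Notation hPS := (hatPsiS P V).

Lemma hPS_eq zeta : hPS zeta = dotv (zz zeta) zeta - hP (zz zeta).
Proof.
rewrite /hatPsiS fd_eq; set f := grad Q _.
have := EqPQ f; rewrite /f gPQ -/f /hatPsi.
have -> : dotv (V *m zz zeta) f = dotv (zz zeta) zeta.
  by rewrite dotv_mulmx /f -grad_hP zzP.
lra.
Qed.

Lemma hPS_ge zeta z : dotv z zeta - hP z <= hPS zeta.
Proof.
rewrite /hatPsiS fd_eq; set f := grad Q _.
have -> : zeta = V^T *m f by rewrite /f -grad_hP zzP.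
rewrite -dotv_mulmx /hatPsi; have := FY (V *m z) f; lra.
Qed.

Lemma zz_max zeta z : dotv z zeta - hP z <= dotv (zz zeta) zeta - hP (zz zeta).
Proof. rewrite -hPS_eq; exact: hPS_ge. Qed.

Lemma max_zz zeta z : (forall y, dotv y zeta - hP y <= dotv z zeta - hP z) -> z = zz zeta.
Proof.
move=> H; apply: grad_hP_inj; rewrite zzP; apply: max_grad => //; exact: dhP.
Qed.


Lemma hP_sc : strictly_convex hP.
Proof.
move=> x y t xy t0 t1; rewrite /hatPsi mulmxDr -!scalemxAr.
have [sQ _ _ _ _] := dQ; apply: sQ => //.
apply: contra xy => /eqP e; apply/eqP.
by apply/eqP; rewrite -subr_eq0; apply/eqP/Vinj; rewrite mulmxBr e subrr.
Qed.

Lemma hP_even : even_fun hP.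
Proof. by move=> z; rewrite /hatPsi mulmxN; case: dQ. Qed.

Lemma hP_ge0 z : 0 <= hP z.
Proof. exact: (diss_ge0 dQ). Qed.

Lemma hP_diss : dissipation hP.
Proof.
split.
- exact: hP_sc.
- by split; [exact: dhP | exact: cont_grad_hP].
- exact: coercive_of_lower (lower_M hP_lower).
- exact: hP_even.
- exact: hP0.
Qed.


Lemma zz_cont : continuous zz.
Proof.
have [Nz0|Nzpos] := posnP Nz.
  have all0 : forall z : 'cV[R]_Nz, z = 0.
    by move=> z; apply/matrixP => i j; exfalso; have := ltn_ord i; rewrite {2}Nz0.
  have -> : zz = fun=> 0 by apply/funext => z; exact: all0.
  exact: cst_continuous.
move=> zeta0; apply/(@cvgrPdist_lt _ _ _ (nbhs zeta0) _ zz (zz zeta0)) => e e0.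
set z0 := zz zeta0.
pose g w := hP w - dotv w zeta0.
have cg : continuous g.
  move=> y; apply: continuousB; last exact: dotv_cont.
  exact/differentiable_continuous/dhP.
pose Sph := [set w : 'cV[R]_Nz | `|w - z0| = e].
pose v0 : 'cV[R]_Nz := delta_mx (Ordinal Nzpos) 0.
have v00 : v0 != 0.
  apply/negP => /eqP/matrixP/(_ (Ordinal Nzpos) 0); rewrite !mxE !eqxx /=.
  by move/eqP; rewrite oner_eq0.
have nv0 : 0 < `|v0| by rewrite normr_gt0.
have S0 : Sph !=set0.
  exists (z0 + (e / `|v0|) *: v0); rewrite /Sph /= addrC addKr normrZ.
  by rewrite ger0_norm ?divfK ?gt_eqF // divr_ge0 // ltW.
have cS : closed Sph.
  have -> : Sph = (fun w => `|w - z0|) @^-1` [set x | x = e] by [].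
  apply: preimage_closed; last exact: closed_eq.
  move=> w _; apply: continuous_comp; last exact: norm_continuous.
  by apply: continuousB => //; exact: cst_continuous.
have bS : forall w, Sph w -> `|w| <= e + `|z0|.
  move=> w Sw; rewrite -Sw; rewrite -{1}(subrK z0 w); exact: ler_normD.
have [wm Swm Hwm] := cV_min S0 cS bS cg.
pose delta := g wm - g z0.
have dpos : 0 < delta.
  rewrite /delta subr_gt0 lt_neqAle.
  have -> : g z0 <= g wm by have := zz_max zeta0 wm; rewrite /g -/z0; lra.
  rewrite andbT; apply/negP => /eqP egw.
  have : wm = z0.
    apply: max_zz => y; have := zz_max zeta0 y; rewrite -/z0.
    move: egw; rewrite /g; lra.
  move=> ewm; move: Swm; rewrite /Sph /= ewm subrr normr0 => e0'.
  by move: e0; rewrite -e0' ltxx.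
pose K := Nz%:R * e + 1.
have K0 : 0 < K by rewrite /K ltr_wpDl // mulr_ge0 // ltW.
pose d := delta / K.
have d0 : 0 < d by rewrite divr_gt0.
apply/(nbhs_normP zeta0); exists d => // zeta /= hz.
rewrite ltNge; apply/negP => ez.
set z1 := zz zeta.
set D := `|z1 - z0|.
have eD : e <= D by rewrite /D distrC.
have D0 : 0 < D by apply: lt_le_trans eD.
pose s := e / D.
have s0 : 0 < s by rewrite divr_gt0.
have s1 : s <= 1 by rewrite ler_pdivrMr // mul1r.
pose w := z0 + s *: (z1 - z0).
have wz0 : w - z0 = s *: (z1 - z0) by rewrite /w addrC addKr.
have wcv : w = s *: z1 + (1 - s) *: z0.
  by apply/matrixP => i j; rewrite !mxE; ring.
have Sw : Sph w.
  rewrite /Sph /= wz0 normrZ -/D ger0_norm ?divfK ?gt_eqF //; exact: ltW.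
have gw := Hwm _ Sw.
have k1 : hP w <= s * hP z1 + (1 - s) * hP z0.
  rewrite wcv; apply: convex_of_strict => //; [exact: hP_sc | exact: ltW].
have k2 := zz_max zeta z0; rewrite -/z1 in k2.
have k3 : dotv w zeta0 = s * dotv z1 zeta0 + (1 - s) * dotv z0 zeta0.
  by rewrite wcv dotvDl !dotvZl.
have k4 : dotv (w - z0) (zeta - zeta0) = s * ((dotv z1 zeta - dotv z0 zeta) - (dotv z1 zeta0 - dotv z0 zeta0)).
  by rewrite wz0 dotvZl dotvBl !dotvBr; ring.
have k5 : dotv (w - z0) (zeta - zeta0) <= Nz%:R * (e * `|zeta - zeta0|).
  apply: le_trans (ler_norm _) _; apply: le_trans (dotv_bound _ _) _.
  by have Sw' : `|w - z0| = e := Sw; rewrite Sw'.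
have k6 : Nz%:R * (e * `|zeta - zeta0|) < delta.
  have : `|zeta - zeta0| < d by rewrite distrC.
  rewrite /d ltr_pdivlMr // /K => h; apply: le_lt_trans h.
  rewrite mulrDr mulr1 mulrA [_ * (_ * e)]mulrC lerDl //.
have k7 : s * (hP z1 - hP z0) <= s * (dotv z1 zeta - dotv z0 zeta).
  apply: ler_wpM2l; [exact: ltW | move: k2; lra].
move: gw k1 k3 k4 k5 k6 k7; rewrite /delta /g !mulrBl !mul1r !mulrBr.
move: (s * hP z1) (s * hP z0) (s * dotv z1 zeta0) (s * dotv z0 zeta0).
move: (s * dotv z1 zeta) (s * dotv z0 zeta) (Nz%:R * (e * `|zeta - zeta0|)).
move=> a1 a2 a3 a4 a5 a6 a7; lra.
Qed.

Lemma hPS_diff zeta0 : differentiable hPS zeta0 /\ grad hPS zeta0 = zz zeta0.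
Proof.
set z0 := zz zeta0.
have lin : linear (fun h : 'cV[R]_Nz => dotv z0 h).
  by move=> a x y; rewrite dotvDr dotvZr.
pose Lm := GRing.isLinear.Build _ _ _ _ _ lin.
pose L : {linear 'cV[R]_Nz -> R} := HB.pack (fun h : 'cV[R]_Nz => dotv z0 h) Lm.
have cL : continuous L.
  have -> : (L : _ -> _) = (fun h => dotv h z0) by apply/funext => h /=; rewrite dotvC.
  exact: dotv_cont.
have expand : hPS \o shift zeta0 = cst (hPS zeta0) + L +o_ 0 id.
  apply/eqaddoP => eps eps0.
  have K0 : 0 < Nz%:R + 1 :> R by rewrite ltr_wpDl.
  have : {for zeta0, continuous zz} by exact: zz_cont.
  move/(@cvgrPdist_lt _ _ _ (nbhs zeta0) _ zz (zz zeta0))/(_ (eps / (Nz%:R + 1))).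
  rewrite divr_gt0 // => /(_ isT) /(nbhs_normP zeta0) [dd dd0 Hd].
  apply/(nbhs_normP (0 : 'cV[R]_Nz)); exists dd => // h /= hh.
  have : `|zeta0 - (h + zeta0)| < dd by rewrite opprD addrCA subrr addr0 -sub0r.
  move=> /Hd /= hz.
  rewrite /= -/z0.
  set z1 := zz (h + zeta0).
  have r0 : 0 <= hPS (h + zeta0) - (hPS zeta0 + dotv z0 h).
    have := hPS_ge (h + zeta0) z0; have := hPS_eq zeta0; rewrite -/z0 dotvDr; lra.
  have r1 : hPS (h + zeta0) - (hPS zeta0 + dotv z0 h) <= dotv (z1 - z0) h.
    have := hPS_ge zeta0 z1; have := hPS_eq (h + zeta0); rewrite -/z1.
    rewrite dotvBl !dotvDr; lra.
  have r2 : dotv (z1 - z0) h <= eps * `|h|.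
    apply: le_trans (ler_norm _) _; apply: le_trans (dotv_bound _ _) _.
    have hz' : `|z1 - z0| <= eps / (Nz%:R + 1) by rewrite distrC ltW.
    apply: le_trans (_ : Nz%:R * (eps / (Nz%:R + 1) * `|h|) <= _).
      by rewrite ler_wpM2l // ler_wpM2r.
    have q : Nz%:R / (Nz%:R + 1) <= 1 :> R by rewrite ler_pdivrMr // mul1r lerDl.
    rewrite mulrA mulrCA; apply: ler_wpM2r => //.
    have e0' : 0 <= eps := ltW eps0.
    move: q e0'; move: (Nz%:R / (Nz%:R + 1)) => qq; nra.
  by rewrite ger0_norm //; apply: le_trans r1 r2.
have dE : 'd hPS zeta0 = L :> (_ -> _) := diff_unique cL expand.
split.
  by apply/diff_locallyP; rewrite dE; split.
by apply/matrixP => i j; rewrite (ord1 j) /grad mxE dE /= dotvC dotv_delta.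
Qed.

Lemma grad_hPS zeta : grad hPS zeta = zz zeta.
Proof. exact: (hPS_diff zeta).2. Qed.

Lemma hPS_sc : strictly_convex hPS.
Proof.
move=> x y t xy t0 t1.
set zt := t *: x + (1 - t) *: y; set z := zz zt.
have e := hPS_eq zt; rewrite -/z in e.
have hx := hPS_ge x z; have hy := hPS_ge y z.
rewrite e /zt dotvDr !dotvZr.
set a := dotv z x - hP z; set b := dotv z y - hP z.
have ea : t * dotv z x + (1 - t) * dotv z y - hP z = t * a + (1 - t) * b.
  by rewrite /a /b; ring.
rewrite ea.
have t1' : 0 < 1 - t by rewrite subr_gt0.
have le1 : t * a <= t * hPS x by rewrite ler_wpM2l // ltW.
have le2 : (1 - t) * b <= (1 - t) * hPS y by rewrite ler_wpM2l // ltW.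
rewrite lt_neqAle (lerD le1 le2) andbT; apply/negP => /eqP heq.
have u0 : 0 <= t * (hPS x - a) by rewrite mulr_ge0 ?subr_ge0 // ltW.
have v0 : 0 <= (1 - t) * (hPS y - b) by rewrite mulr_ge0 ?subr_ge0 // ltW.
have uv : t * (hPS x - a) + (1 - t) * (hPS y - b) = 0.
  have -> : t * (hPS x - a) + (1 - t) * (hPS y - b) =
    (t * hPS x + (1 - t) * hPS y) - (t * a + (1 - t) * b) by ring.
  by rewrite heq subrr.
move: uv => /eqP; rewrite paddr_eq0 // => /andP [/eqP ua /eqP ub].
move: ua => /eqP; rewrite mulf_eq0 (gt_eqF t0) /= subr_eq0 => /eqP ha.
move: ub => /eqP; rewrite mulf_eq0 (gt_eqF t1') /= subr_eq0 => /eqP hb.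
have zx : z = zz x by apply: max_zz => y'; rewrite -/a -ha; exact: hPS_ge.
have zy : z = zz y by apply: max_zz => y'; rewrite -/b -hb; exact: hPS_ge.
move/negP: xy; apply; apply/eqP.
by rewrite -(zzP x) -(zzP y) -zx -zy.
Qed.

Lemma hPS_even : even_fun hPS.
Proof.
have H zeta : hPS (- zeta) <= hPS zeta.
  rewrite (hPS_eq (- zeta)); set z' := zz (- zeta).
  have := hPS_ge zeta (- z'); rewrite dotvNl dotvNr hP_even; lra.
by move=> zeta; apply/eqP; rewrite eq_le H /= -{1}(opprK zeta) H.
Qed.

Lemma hPS0 : hPS 0 = 0.
Proof.
apply/eqP; rewrite eq_le; apply/andP; split.
  by rewrite hPS_eq dotv0r sub0r oppr_le0 hP_ge0.
by have := hPS_ge 0 0; rewrite dotv0l hP0 subrr.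
Qed.

Lemma hPS_diss : dissipation hPS.
Proof.
split.
- exact: hPS_sc.
- split; first by move=> z; exact: (hPS_diff z).1.
  have -> : grad hPS = zz by apply/funext => z; exact: grad_hPS.
  exact: zz_cont.
- apply: coercive_of_lower; apply: lower_M => xi.
  by exists (hP xi) => y; rewrite dotvC; exact: hPS_ge.
- exact: hPS_even.
- exact: hPS0.
Qed.


Lemma main_sec :
  (forall zeta : 'cV[R]_Nz, exists! f, is_constr_min P V^T zeta f) /\
  (LF_conj hP hPS /\ LF_conj hPS hP) /\
  (forall z, differentiable hP z /\ grad hP z = V^T *m grad Q (V *m z)) /\
  (forall z, grad hPS (grad hP z) = z) /\ (forall zeta, grad hP (grad hPS zeta) = zeta) /\
  (forall zeta, V *m grad hPS zeta = grad P (fdiamond P V zeta)) /\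
  (dissipation hP /\ dissipation hPS).
Proof.
split.
  move=> zeta; exists (grad Q (V *m zz zeta)); split.
    by rewrite -{1}(zzP zeta); exact: min_of_grad.
  move=> f' h; apply: (constr_min_uniq _ h).
  by rewrite -{1}(zzP zeta); exact: min_of_grad.
split; first split.
- move=> zeta; split.
    by exists (zz zeta); rewrite hPS_eq dotvC.
  by move=> z; rewrite dotvC; exact: hPS_ge.
- move=> z; split.
    exists (grad hP z); have := hPS_eq (grad hP z); rewrite zz_grad; lra.
  by move=> zeta; have := hPS_ge zeta z; lra.
split; first by move=> z; split; [exact: dhP | exact: grad_hP].
split; first by move=> z; rewrite grad_hPS zz_grad.
split; first by move=> zeta; rewrite grad_hPS zzP.
split; first by move=> zeta; rewrite grad_hPS fd_eq gPQ.
split; [exact: hP_diss | exact: hPS_diss].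
Qed.

End Main.

Theorem mainTheorem12 (R : realType) (NX Ne Nz : nat)
  (S : 'M[int]_(NX, Ne)) (V : 'M[R]_(Ne, Nz))
  (PsiS Psi : 'cV[R]_NX -> 'cV[R]_Ne -> R) :
  (forall z : 'cV[R]_Nz, V *m z = 0 -> z = 0) ->
  (forall f : 'cV[R]_Ne, map_mx intr S *m f = 0 <-> exists z, f = V *m z) ->
  (forall x : 'cV[R]_NX, (forall i, 0 < x i 0) -> dissipation (PsiS x)) ->
  (forall x : 'cV[R]_NX, (forall i, 0 < x i 0) -> LF_conj (PsiS x) (Psi x)) ->
  (forall x : 'cV[R]_NX, (forall i, 0 < x i 0) -> dissipation (Psi x)) ->
  (forall x : 'cV[R]_NX, (forall i, 0 < x i 0) ->
     (forall f, grad (Psi x) (grad (PsiS x) f) = f) /\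
     (forall j, grad (PsiS x) (grad (Psi x) j) = j)) ->
  forall x : 'cV[R]_NX, (forall i, 0 < x i 0) ->
  let hP := hatPsi (Psi x) V in
  let hPS := hatPsiS (PsiS x) V in
      (forall zeta : 'cV[R]_Nz, exists! f, is_constr_min (PsiS x) V^T zeta f) /\
      (LF_conj hP hPS /\ LF_conj hPS hP) /\
      (forall z, differentiable hP z /\ grad hP z = V^T *m grad (Psi x) (V *m z)) /\
      (forall z, grad hPS (grad hP z) = z) /\ (forall zeta, grad hP (grad hPS zeta) = zeta) /\
      (forall zeta, V *m grad hPS zeta = grad (PsiS x) (fdiamond (PsiS x) V zeta)) /\
      (dissipation hP /\ dissipation hPS).
Proof.
move=> Vinj _ dPS LFc dPsi ginv x xpos hP hPS.
have [gQP gPQ] := ginv x xpos.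
exact: (main_sec Vinj (dPS x xpos) (LFc x xpos) (dPsi x xpos) gQP gPQ).
Qed.
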